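(* For every $\varepsilon>0$ there is a constant $C>0$ such that the following holds. For every finite set $X$ with $|X|=n\ge 2$ and every nontrivial monotone increasing family $\mathcal F\subseteq 2^X$, writing $m(p)=\mu_p(\mathcal F)$ and $p_c=p_c(\mathcal F)$, there exists $p\in[n^{-\varepsilon}p_c,\;p_c]$ such that $$p\,m'(p)\;\le\;C\,m(p)\,\log_2\!\big(1/m(p)\big)$$ (equivalently, $p\,m'(p)\le C\log_2(1/p)\cdot m(p)\log_p m(p)$, i.e. $\mathcal F$ is $(C\log_2(1/p),p)$-optimal).
   Context: For a finite set $X$ with $|X|=n$ and $p\in[0,1]$, $\mu_p$ is the product measure on $2^X$ given by $\mu_p(S)=p^{|S|}(1-p)^{n-|S|}$, and $\mu_p(\mathcal F)=\sum_{S\in\mathcal F}\mu_p(S)$. A family $\mathcal F\subseteq 2^X$ is monotone increasing if $B\supseteq A\in\mathcal F$ implies $B\in\mathcal F$; it is nontrivial if $\mathcal F\neq\emptyset$ and $\mathcal F\neq 2^X$. For such $\mathcal F$, $m(p)=\mu_p(\mathcal F)$ is a strictly increasing polynomial in $p$ with $m(0)=0$, $m(1)=1$, and $p_c(\mathcal F)$ denotes the unique $p\in[0,1]$ with $\mu_p(\mathcal F)=1/2$. Given $C>0$, $\mathcal F$ is called $(C,p)$-optimal if $p\,m'(p)\le C\,m(p)\log_p m(p)$, where $\log_p x=\ln x/\ln p$. *)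

(* Defs.v *)
From HB Require Import structures.
From mathcomp Require Import all_boot all_order all_algebra.
From mathcomp Require Import all_classical all_reals all_analysis.
Set Implicit Arguments. Unset Strict Implicit. Unset Printing Implicit Defensive.
Import Order.TTheory GRing.Theory Num.Theory.
Local Open Scope ring_scope.

Definition mu (R : realType) (X : finType) (p : R) (F : {set {set X}}) : R :=
  \sum_(S in F) p ^+ #|S| * (1 - p) ^+ (#|X| - #|S|).

Definition monotone_increasing (X : finType) (F : {set {set X}}) : Prop :=
  forall A B : {set X}, A \subset B -> A \in F -> B \in F.

Definition nontrivial (X : finType) (F : {set {set X}}) : Prop :=
  F != finset.set0 /\ F != [set: {set X}]%SET.

Definition log2 (R : realType) (x : R) : R := ln x / ln 2.

(* Main.v *)
Require Import Defs.
From HB Require Import structures.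
From mathcomp Require Import all_boot all_order all_algebra.
From mathcomp Require Import all_classical all_reals all_analysis.
From mathcomp Require Import ring lra.
Import Order.TTheory GRing.Theory Num.Theory.
Local Open Scope ring_scope.
Lemma sum_all (R : realType) (X : finType) (p : R) :
  \sum_(S : {set X}) p ^+ #|S| * (1 - p) ^+ (#|X| - #|S|) = 1.
Proof.
have h1 : \prod_(x : X) \sum_(b : bool) (if b then p else 1 - p) = 1.
  by rewrite big1 // => x _; rewrite big_bool /= addrC subrK.
rewrite -[RHS]h1 bigA_distr_bigA /=.
rewrite (reindex (fun S : {set X} => [ffun x => x \in S])) /=; last first.
  exists (fun f : {ffun X -> bool} => [set x | f x]) => [S _|f _].
    by apply/setP => x; rewrite inE ffunE.
  by apply/ffunP => x; rewrite ffunE inE.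
apply: eq_bigr => S _.
rewrite [RHS](bigID (mem S)) /=.
rewrite [in RHS](eq_bigr (fun=> p)); last by move=> x xS; rewrite ffunE xS.
rewrite [X in _ = _ * X](eq_bigr (fun=> 1 - p)); last by move=> x /negbTE xS; rewrite ffunE xS.
rewrite !prodr_const -(cardC S) addKn.
congr (_ * _ ^+ _); apply: eq_card => x; by rewrite !inE.
Qed.

Lemma term_ge0 (R : realType) (X : finType) (p : R) (S : {set X}) :
  0 <= p <= 1 -> 0 <= p ^+ #|S| * (1 - p) ^+ (#|X| - #|S|).
Proof. by case/andP => h0 h1; rewrite mulr_ge0 // exprn_ge0 // subr_ge0. Qed.

Lemma mu_lt1 (R : realType) (X : finType) (F : {set {set X}}) (p : R) :
  F != [set: {set X}]%SET -> 0 < p < 1 -> mu p F < 1.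
Proof.
move=> hT /andP[p0 p1].
have [S0 HS0] : exists S0, S0 \notin F.
  case: (pickP (fun S => S \notin F)) => [S0 HS0 | H]; first by exists S0.
  move/negP: hT; case; apply/eqP/setP => S; rewrite inE.
  by move: (H S) => /= /negbFE.
rewrite -(sum_all R X p) (bigID (fun S => S \in F)) /= /mu ltrDl.
rewrite (bigD1 S0) //=.
apply: ltr_pwDl.
  by rewrite mulr_gt0 // exprn_gt0 // subr_gt0.
by apply: sumr_ge0 => S _; apply: term_ge0; rewrite ltW // ltW.
Qed.

Lemma mu_ge (R : realType) (X : finType) (F : {set {set X}}) (s q : R) :
  0 < s <= 1 -> 0 <= q <= 1 -> s ^+ #|X| * mu q F <= mu (s * q) F.
Proof.
move=> /andP[s0 s1] /andP[q0 q1].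
rewrite /mu mulr_sumr; apply: ler_sum => S _.
have hk : (#|S| <= #|X|)%N by apply: max_card.
have e1 : s ^+ #|X| <= s ^+ #|S| by apply: ler_wiXn2l => //; exact: ltW.
have e2 : (1 - q) ^+ (#|X| - #|S|) <= (1 - s * q) ^+ (#|X| - #|S|).
  apply: lerXn2r; rewrite ?nnegrE ?subr_ge0 //.
    by rewrite mulr_ile1 // ltW.
  by rewrite lerD2l lerN2 ler_piMl.
have hB : 0 <= (1 - q) ^+ (#|X| - #|S|) by rewrite exprn_ge0 // subr_ge0.
have hq : 0 <= q ^+ #|S| by rewrite exprn_ge0.
rewrite exprMn -mulrA.
apply: (@le_trans _ _ (s ^+ #|S| * (q ^+ #|S| * (1 - q) ^+ (#|X| - #|S|)))).
  by apply: ler_wpM2r => //; rewrite mulr_ge0.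
apply: ler_wpM2l; first by rewrite exprn_ge0 // ltW.
by apply: ler_wpM2l.
Qed.

Lemma derivable_bigsum (R : realType) (I : Type) (s : seq I) (P : pred I)
  (G : I -> R -> R) (x : R) :
  (forall i, derivable (G i) x 1) ->
  derivable (fun q => \sum_(i <- s | P i) G i q) x 1.
Proof.
move=> hG; elim: s => [|i s IH].
  have -> : (fun q => \sum_(i <- [::] | P i) G i q) = cst 0.
    by apply/funext => q; rewrite big_nil.
  exact: derivable_cst.
case: (boolP (P i)) => Pi.
  have -> : (fun q => \sum_(j <- i :: s | P j) G j q) =
     G i + (fun q => \sum_(j <- s | P j) G j q).
    by apply/funext => q; rewrite big_cons Pi.
  exact: derivableD.
have -> : (fun q => \sum_(j <- i :: s | P j) G j q) =
     (fun q => \sum_(j <- s | P j) G j q).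
  by apply/funext => q; rewrite big_cons (negbTE Pi).
exact: IH.
Qed.

Lemma mu_derivable (R : realType) (X : finType) (F : {set {set X}}) (x : R) :
  derivable (fun q => mu q F) x 1.
Proof.
have hG : forall S : {set X}, derivable (fun q : R => q ^+ #|S| * (1 - q) ^+ (#|X| - #|S|)) x 1.
  move=> S.
  have -> : (fun q : R => q ^+ #|S| * (1 - q) ^+ (#|X| - #|S|)) =
     (id ^+ #|S|) * ((cst 1 - id) ^+ (#|X| - #|S|)).
    by apply/funext => q; rewrite /= !exprfctE.
  apply: derivableM; apply: derivableX; first exact: derivable_id.
  apply: derivableB; [exact: derivable_cst|exact: derivable_id].
exact: (@derivable_bigsum R {set X} (index_enum {set X}) (fun S => S \in F) _ x hG).
Qed.

Lemma ln_le (R : realType) (x y : R) : 0 < x -> x <= y -> ln x <= ln y.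
Proof.
move=> x0 xy; have y0 : 0 < y by apply: lt_le_trans xy.
by rewrite ler_ln ?posrE.
Qed.

Theorem mainTheorem3 (R : realType) (eps : R) (heps : 0 < eps) :
  exists C : R, 0 < C /\
    forall (X : finType) (F : {set {set X}}),
      (2 <= #|X|)%N ->
      monotone_increasing F ->
      nontrivial F ->
      forall pc : R, 0 <= pc <= 1 -> mu pc F = 2^-1 ->
      exists p : R,
        (#|X|%:R `^ (- eps)) * pc <= p /\ p <= pc /\
        p * derive1 (fun q : R => mu q F) p <= C * mu p F * log2 ((mu p F)^-1).
Proof.
set l2 := ln (2:R).
have l2pos : 0 < l2 by apply: ln_gt0; rewrite ltr1n.
set D := ln (l2 + eps) - ln l2.
have D0 : 0 <= D by rewrite subr_ge0 ln_le // lerDl ltW.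
set k := 2 + D / l2.
have k0 : 0 < k by rewrite ltr_wpDr // divr_ge0 // ltW.
set c := k / eps.
have c0 : 0 < c by rewrite divr_gt0.
exists (c * l2); split; first by rewrite mulr_gt0.
move=> X F hn _ [F0 FT] pc /andP[pc0 pc1] hpc.
have [pceq|pcpos] : pc = 0 \/ 0 < pc.
  by move: pc0; rewrite le_eqVlt => /orP[/eqP<-|->]; [left|right].
  subst pc; exists 0; split; first by rewrite mulr0.
  split => //; rewrite mul0r hpc invrK /log2 divff ?mulr1; last by rewrite gt_eqF.
  by rewrite mulr_ge0 // ?invr_ge0 // ltW // mulr_gt0.
set N := #|X|.
set n : R := N%:R.
have n2 : 2 <= n by rewrite ler_nat.
have n0 : 0 < n by apply: lt_le_trans n2.
have lnn : l2 <= ln n by apply: ln_le.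
set r := n `^ (- eps).
have r0 : 0 < r by apply: powR_gt0.
have lnr : ln r = - eps * ln n by rewrite /r ln_powR.
have r1 : r < 1.
  rewrite ltNge; apply/negP => /ln_ge0; rewrite lnr mulNr oppr_ge0 => h.
  have : 0 < eps * ln n by rewrite mulr_gt0 // (lt_le_trans l2pos).
  by rewrite ltNge h.
set a := r * pc.
have a0 : 0 < a by rewrite mulr_gt0.
have apc : a < pc by rewrite /a gtr_pMl.
set m := fun q : R => mu q F.
have hqpos : forall q, a <= q <= pc -> 0 < q.
  by move=> q /andP[h _]; apply: lt_le_trans h.
have hmpos : forall q, a <= q <= pc -> 0 < m q.
  move=> q hq; have q0 := hqpos q hq; case/andP: hq => _ hq.
  have s0 : 0 < q / pc by rewrite divr_gt0.
  have s1 : q / pc <= 1 by rewrite ler_pdivrMr // mul1r.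
  have := @mu_ge R X F (q / pc) pc; rewrite divfK ?gt_eqF // hpc.
  move=> h; apply: lt_le_trans (h _ _); last by rewrite pc0 pc1.
    by rewrite mulr_gt0 // exprn_gt0.
  by rewrite s0 s1.
have hmlt1 : forall q, a <= q <= pc -> m q < 1.
  move=> q hq; have q0 := hqpos q hq; case/andP: hq => _.
  rewrite le_eqVlt => /orP[/eqP->|qpc].
    by rewrite /m hpc invf_lt1 // ltr1n.
  by apply: mu_lt1 => //; rewrite q0 (lt_le_trans qpc).
set phi := ((@ln R) \o (- ((@ln R) \o m))) + c *: (@ln R).
set df := fun q : R => (- ln (m q))^-1 * (- ((m q)^-1 * 'D_1 m q)) + c *: q^-1.
have hder : forall q, a <= q <= pc -> is_derive q 1 phi (df q).
  move=> q hq.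
  have q0 := hqpos q hq; have mq0 := hmpos q hq; have mq1 := hmlt1 q hq.
  have L0 : 0 < - ln (m q) by rewrite oppr_gt0 ln_lt0 // mq0 mq1.
  have dm : is_derive q 1 m ('D_1 m q) := derivableP (@mu_derivable R X F q).
  have d1 := is_derive1_comp (is_derive1_ln mq0) dm.
  have d2 := is_deriveN d1.
  have d3 := @is_derive1_comp R (@ln R) _ q _ _ (is_derive1_ln L0) d2.
  have d4 := is_deriveZ c (is_derive1_ln q0).
  exact: is_deriveD d3 d4.
have [xi xiin hmvt] : exists2 xi, xi \in `]a, pc[ & phi pc - phi a = df xi * (pc - a).
  apply: MVT => //.
    by move=> x; rewrite in_itv /= => /andP[h1 h2]; apply: hder; rewrite !ltW.
  apply: derivable_within_continuous => x; rewrite in_itv /= => hx.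
  exact: (@ex_derive _ _ _ _ _ _ _ (hder x hx)).
have xiin' : a <= xi <= pc by move: xiin; rewrite in_itv /= => /andP[h1 h2]; rewrite !ltW.
have phiE : forall q, phi q = ln (- ln (m q)) + c * ln q by [].
have ha : a <= a <= pc by rewrite lexx ltW.
have ma0 := hmpos a ha; have ma1 := hmlt1 a ha.
have two0 : (0:R) < 2 by [].
have hma : r ^+ N * 2^-1 <= m a.
  have := @mu_ge R X F r pc; rewrite hpc; apply.
    by rewrite r0 ltW.
  by rewrite pc0 pc1.
have lnma : ln r *+ N - l2 <= ln (m a).
  have -> : ln r *+ N - l2 = ln (r ^+ N * 2^-1).
    by rewrite lnM ?posrE ?exprn_gt0 ?invr_gt0 // lnXn // lnV ?posrE.
  by apply: ln_le => //; rewrite mulr_gt0 ?exprn_gt0 ?invr_gt0.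
rewrite -mulr_natr -/n lnr in lnma.
set La := - ln (m a).
have La0 : 0 < La by rewrite oppr_gt0 ln_lt0 // ma0 ma1.
have lnn_n : ln n < n by apply: ln_sublinear.
have lnn0 : 0 < ln n by apply: lt_le_trans lnn.
have hb : La <= (l2 + eps) * n ^+ 2.
  have h1 : ln n * n <= n * n by rewrite ler_wpM2r // ltW.
  have h2 : 1 <= n * n by nra.
  rewrite expr2 /La.
  have h3 : eps * (ln n * n) <= eps * (n * n) by rewrite ler_wpM2l // ltW.
  have h4 : l2 * 1 <= l2 * (n * n) by rewrite ler_wpM2l // ltW.
  rewrite mulr1 in h4.
  have e5 : - eps * ln n * n = - (eps * (ln n * n)) by ring.
  rewrite e5 in lnma.
  lra.
have lnLa : ln La <= ln (l2 + eps) + 2 * ln n.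
  have -> : ln (l2 + eps) + 2 * ln n = ln ((l2 + eps) * n ^+ 2).
    rewrite lnM ?posrE ?exprn_gt0 ?addr_gt0 // lnXn // mulr2n.
    by rewrite mulrDl mul1r.
  exact: ln_le.
have phipc : phi pc = ln l2 + c * ln pc.
  by rewrite phiE /m hpc lnV ?posrE // opprK.
have phia : phi a = ln La + c * (- eps * ln n + ln pc).
  by rewrite phiE /a lnM ?posrE // lnr.
have ce : c * eps = k by rewrite /c divfK // gt_eqF.
have hD : D <= D / l2 * ln n.
  have := ler_wpM2l (divr_ge0 D0 (ltW l2pos)) lnn.
  by rewrite divfK // gt_eqF.
have hdiff : 0 <= phi pc - phi a.
  have ce' : c * (- eps * ln n + ln pc) = - (k * ln n) + c * ln pc.
    by rewrite -ce; ring.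
  have ek : k * ln n = 2 * ln n + D / l2 * ln n by rewrite /k mulrDl.
  have eD : D = ln (l2 + eps) - ln l2 by [].
  rewrite phipc phia ce'.
  lra.
have dfxi : 0 <= df xi.
  have d0 : 0 < pc - a by rewrite subr_gt0.
  by rewrite -(pmulr_lge0 _ d0) -hmvt.
exists xi; case/andP: (xiin') => xa xpc; split => //; split => //.
have xi0 := hqpos xi xiin'.
have M0 := hmpos xi xiin'; have M1 := hmlt1 xi xiin'.
rewrite derive1E.
change (mu xi F) with (m xi).
set M := m xi in M0 M1 dfxi *.
set d := 'D_1 m xi in dfxi *.
have L0 : 0 < - ln M by rewrite oppr_gt0 ln_lt0 // M0 M1.
set L := - ln M in L0 dfxi.
have eL : log2 M^-1 = L / l2 by rewrite /log2 lnV ?posrE.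
rewrite eL.
have e1 : (xi * M * L) * df xi = c * M * L - xi * d.
  rewrite /df /= -/M -/d -/L.
  rewrite /GRing.scale /=.
  field; rewrite ?gt_eqF //.
have e2 : c * l2 * M * (L / l2) = c * M * L.
  by field; rewrite gt_eqF.
have := mulr_ge0 (ltW (mulr_gt0 (mulr_gt0 xi0 M0) L0)) dfxi.
rewrite e1 e2; lra.
Qed.
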